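(* If $U$ and $V$ are nonempty open subsets of $\Omega$, then there exists $N\in\mathbb Z^+$ such that $U\cap T^nV\neq\emptyset$ (equivalently $T^{-n}U\cap V\ne\emptyset$) for all $n\ge N$.
   Context: Let $I=[0,1)$ with its usual metric $d_I$, fix $\theta\in(0,1)$, and let $\Omega=I^{\mathbb Z}$ with metric $d(x,y)=\sup_{k\in\mathbb Z}\theta^{|k|}d_I(x_k,y_k)$. Let $\tau:I\to I$ have full branches, so that $b=\#\tau^{-1}(t)$ is constant. Assume there is $\eta\in(0,1)$ such that every inverse branch $\zeta$ of $\tau$ satisfies $d_I(\zeta(s),\zeta(t))\le\eta\,d_I(s,t)$. Let $(\bar\tau x)_i=\tau(x_i)$ and let $\sigma$ be the shift $(\sigma x)_i=x_{i+1}$. Let $E:\Omega\to\Omega$ be invertible and suppose there is $C_E\in(0,\eta^{-1})$ with $d(\sigma^nE^{-1}x,\sigma^nE^{-1}y)\le C_E\,d(\sigma^nx,\sigma^ny)$ for all $n\in\mathbb Z$ and $x,y\in\Omega$. The coupled map is $T=E\circ\bar\tau$. *)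

(* Defs.v *)
From Stdlib Require Import Reals Lra ZArith Classical ClassicalEpsilon.
Open Scope R_scope.

Definition inI (s : R) : Prop := 0 <= s < 1.

Definition seqZ := Z -> R.
Definition inOmega (x : seqZ) : Prop := forall k : Z, inI (x k).

Definition dterms (theta : R) (x y : seqZ) (r : R) : Prop :=
  exists k : Z, r = theta ^ (Z.abs_nat k) * Rabs (x k - y k).

(* d(x,y) = sup_k theta^|k| d_I(x_k,y_k)  (least upper bound, chosen
   classically; it exists for x, y in Omega). *)
Definition dOmega (theta : R) (x y : seqZ) : R :=
  epsilon (inhabits 0) (fun m => is_lub (dterms theta x y) m).

Definition shiftn (n : Z) (x : seqZ) : seqZ := fun i => x (i + n)%Z.

Definition taubar (tau : R -> R) (x : seqZ) : seqZ := fun i => tau (x i).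

Definition openOmega (theta : R) (U : seqZ -> Prop) : Prop :=
  (forall x, U x -> inOmega x) /\
  forall x, U x -> exists r, 0 < r /\
    forall y, inOmega y -> dOmega theta x y < r -> U y.

(* tau : I -> I has full branches: b inverse branches zeta_0..zeta_{b-1},
   each mapping I into I with tau o zeta_j = id on I, pairwise distinct
   values, and every preimage of t is one of the zeta_j t
   (so #tau^{-1}(t) = b for every t). *)
Definition full_branches (tau : R -> R) (b : nat) (zeta : nat -> R -> R) : Prop :=
  (forall s, inI s -> inI (tau s)) /\
  (forall j t, (j < b)%nat -> inI t -> inI (zeta j t) /\ tau (zeta j t) = t) /\
  (forall i j t, (i < b)%nat -> (j < b)%nat -> inI t -> zeta i t = zeta j t -> i = j) /\
  (forall s, inI s -> exists j, (j < b)%nat /\ zeta j (tau s) = s).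

(* Main.v *)
Require Import Defs.
From Stdlib Require Import Reals ZArith Lra Lia FunctionalExtensionality ClassicalEpsilon.
Open Scope R_scope.

Lemma pow_le1 (t : R) (n : nat) : 0 <= t <= 1 -> t ^ n <= 1.
Proof.
  intros Ht; induction n; simpl; [lra|].
  assert (0 <= t ^ n) by (apply pow_le; lra). nra.
Qed.

Lemma absI (a c : R) : inI a -> inI c -> Rabs (a - c) < 1.
Proof. unfold inI, Rabs; intros; destruct Rcase_abs; lra. Qed.

Lemma dOmega_lub theta x y : 0 < theta < 1 -> inOmega x -> inOmega y ->
  is_lub (dterms theta x y) (dOmega theta x y).
Proof.
  intros Ht Hx Hy. unfold dOmega. apply epsilon_spec.
  destruct (completeness (dterms theta x y)) as [m Hm].
  - exists 1. intros r [k ->].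
    assert (theta ^ Z.abs_nat k <= 1) by (apply pow_le1; lra).
    assert (0 <= theta ^ Z.abs_nat k) by (apply pow_le; lra).
    pose proof (absI _ _ (Hx k) (Hy k)). pose proof (Rabs_pos (x k - y k)). nra.
  - exists (theta ^ Z.abs_nat 0 * Rabs (x 0%Z - y 0%Z)). exists 0%Z. reflexivity.
  - exists m; exact Hm.
Qed.

Lemma dOmega_le1 theta x y : 0 < theta < 1 -> inOmega x -> inOmega y ->
  dOmega theta x y <= 1.
Proof.
  intros Ht Hx Hy. apply (proj2 (dOmega_lub theta x y Ht Hx Hy)).
  intros r [k ->].
  assert (theta ^ Z.abs_nat k <= 1) by (apply pow_le1; lra).
  assert (0 <= theta ^ Z.abs_nat k) by (apply pow_le; lra).
  pose proof (absI _ _ (Hx k) (Hy k)). pose proof (Rabs_pos (x k - y k)). nra.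
Qed.

Lemma dOmega_coord theta eta a b c e : 0 < theta < 1 -> 0 <= eta ->
  inOmega a -> inOmega b -> inOmega c -> inOmega e ->
  (forall k, Rabs (a k - b k) <= eta * Rabs (c k - e k)) ->
  dOmega theta a b <= eta * dOmega theta c e.
Proof.
  intros Ht He Ha Hb Hc Hd H.
  apply (proj2 (dOmega_lub theta a b Ht Ha Hb)).
  intros r [k ->].
  assert (Hle : theta ^ Z.abs_nat k * Rabs (c k - e k) <= dOmega theta c e).
  { apply (proj1 (dOmega_lub theta c e Ht Hc Hd)). exists k; reflexivity. }
  assert (0 <= theta ^ Z.abs_nat k) by (apply pow_le; lra).
  specialize (H k).
  apply Rle_trans with (theta ^ Z.abs_nat k * (eta * Rabs (c k - e k))).
  - apply Rmult_le_compat_l; auto.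
  - nra.
Qed.

Lemma shiftn0 x : shiftn 0 x = x.
Proof. apply functional_extensionality; intro i; unfold shiftn; now rewrite Z.add_0_r. Qed.

Theorem mainTheorem12
  (theta eta CE : R) (tau : R -> R) (b : nat) (zeta : nat -> R -> R)
  (E Einv : seqZ -> seqZ)
  (Htheta : 0 < theta < 1)
  (Heta : 0 < eta < 1)
  (Hfull : full_branches tau b zeta)
  (Hcontr : forall j s t, (j < b)%nat -> inI s -> inI t ->
              Rabs (zeta j s - zeta j t) <= eta * Rabs (s - t))
  (HEmap : forall x, inOmega x -> inOmega (E x))
  (HEinvmap : forall x, inOmega x -> inOmega (Einv x))
  (HEinv1 : forall x, inOmega x -> E (Einv x) = x)
  (HEinv2 : forall x, inOmega x -> Einv (E x) = x)
  (HCE : 0 < CE < / eta)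
  (HElip : forall (n : Z) (x y : seqZ), inOmega x -> inOmega y ->
     dOmega theta (shiftn n (Einv x)) (shiftn n (Einv y))
       <= CE * dOmega theta (shiftn n x) (shiftn n y))
  (U V : seqZ -> Prop)
  (HU : openOmega theta U) (HV : openOmega theta V)
  (HUne : exists x, U x) (HVne : exists x, V x) :
  let T := fun x => E (taubar tau x) in
  exists N : nat, (1 <= N)%nat /\
    forall n : nat, (N <= n)%nat ->
      exists x, U x /\ exists y, V y /\ Nat.iter n T y = x.
Proof.
  intros T.
  destruct Hfull as [Htau [Hzeta [_ Hsurj]]].
  set (lam := eta * CE).
  assert (Hlam : 0 < lam < 1).
  { unfold lam. split; [nra|].
    assert (eta * CE < eta * / eta) by (apply Rmult_lt_compat_l; lra).
    rewrite Rinv_r in H; lra. }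
  set (jsel := fun (p : seqZ) k =>
     epsilon (inhabits 0%nat) (fun j => (j < b)%nat /\ zeta j (tau (p k)) = p k)).
  assert (Hjsel : forall p k, inOmega p -> (jsel p k < b)%nat /\ zeta (jsel p k) (tau (p k)) = p k).
  { intros p k Hp. unfold jsel. apply epsilon_spec. apply Hsurj, Hp. }
  set (G := fun (p : seqZ) (x : seqZ) => fun k => zeta (jsel p k) (Einv x k)).
  assert (HTom : forall x, inOmega x -> inOmega (T x)).
  { intros x Hx. apply HEmap. intro k. apply Htau, Hx. }
  assert (HGom : forall p x, inOmega p -> inOmega x -> inOmega (G p x)).
  { intros p x Hp Hx k. apply Hzeta. apply Hjsel, Hp. apply HEinvmap, Hx. }
  assert (HTG : forall p x, inOmega p -> inOmega x -> T (G p x) = x).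
  { intros p x Hp Hx. unfold T.
    replace (taubar tau (G p x)) with (Einv x). apply HEinv1, Hx.
    apply functional_extensionality; intro k. unfold taubar, G.
    symmetry. apply Hzeta. apply Hjsel, Hp. apply HEinvmap, Hx. }
  assert (HGT : forall p, inOmega p -> G p (T p) = p).
  { intros p Hp. unfold G, T. rewrite HEinv2.
    2:{ intro k. apply Htau, Hp. }
    apply functional_extensionality; intro k. unfold taubar. apply Hjsel, Hp. }
  assert (HGlip : forall p x y, inOmega p -> inOmega x -> inOmega y ->
     dOmega theta (G p x) (G p y) <= lam * dOmega theta x y).
  { intros p x y Hp Hx Hy.
    apply Rle_trans with (eta * dOmega theta (Einv x) (Einv y)).
    - apply (dOmega_coord theta eta (G p x) (G p y) (Einv x) (Einv y) Htheta
        ltac:(lra) (HGom p x Hp Hx) (HGom p y Hp Hy) (HEinvmap x Hx) (HEinvmap y Hy)).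
      intro k. unfold G. apply Hcontr. apply Hjsel, Hp.
      apply HEinvmap, Hx. apply HEinvmap, Hy.
    - pose proof (HElip 0%Z x y Hx Hy). rewrite !shiftn0 in H.
      unfold lam. rewrite Rmult_assoc. apply Rmult_le_compat_l; lra. }
  assert (Hback : forall n v u, inOmega v -> inOmega u ->
     exists w, inOmega w /\ Nat.iter n T w = u /\
       dOmega theta v w <= lam ^ n * dOmega theta (Nat.iter n T v) u).
  { induction n as [|n IH]; intros v u Hv Hu.
    - exists u. split; [auto|]. split; [reflexivity|]. simpl Nat.iter. rewrite pow_O, Rmult_1_l. apply Rle_refl.
    - destruct (IH (T v) u (HTom v Hv) Hu) as [w' [Hw' [Hit Hd]]].
      exists (G v w'). split; [apply HGom; auto|]. split.
      + rewrite Nat.iter_succ_r, HTG; auto.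
      + rewrite Nat.iter_succ_r.
        pattern v at 1. rewrite <- (HGT v Hv).
        apply Rle_trans with (lam * dOmega theta (T v) w').
        * apply HGlip; auto.
        * simpl. rewrite Rmult_assoc. apply Rmult_le_compat_l; lra. }
  destruct HUne as [u Hu]. destruct HVne as [v Hv].
  destruct HU as [HUom _]. destruct HV as [HVom HVop].
  destruct (HVop v Hv) as [r [Hr Hball]].
  destruct (pow_lt_1_zero lam ltac:(rewrite Rabs_pos_eq; lra) r Hr) as [N HN].
  exists (Nat.max N 1). split; [apply Nat.le_max_r|].
  intros n Hn.
  destruct (Hback n v u (HVom v Hv) (HUom u Hu)) as [w [Hw [Hit Hd]]].
  exists u. split; auto. exists w. split; auto.
  apply Hball; auto.
  assert (Hp := HN n ltac:(lia)). rewrite Rabs_pos_eq in Hp by (apply pow_le; lra).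
  assert (0 <= lam ^ n) by (apply pow_le; lra).
  pose proof (dOmega_le1 theta (Nat.iter n T v) u Htheta
    ltac:(clear -HTom Hv HVom; induction n; simpl; auto) (HUom u Hu)).
  nra.
Qed.
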